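(* In the real projective plane, let $g_1,g_2$ be distinct lines and $C_1,C_2$ distinct points, and suppose the coordinate system is such that $g_1$ and $g_2$ meet on the line at infinity (they are parallel lines in the affine plane), $C_2$ lies on the line at infinity, and $C_1$ is an affine point. Suppose that the distances from $C_1$ to $g_1$ and to $g_2$ are not equal. Then the polygonal lines inscribed in $g_1\cup g_2$ and circumscribed about the singular dual conic given by $C_1,C_2$ satisfy: (i) the only finite such polygonal line consists of a single segment, determined by the intersection points of $g_1$ and $g_2$ with the line $C_1C_2$; (ii) all other such polygonal lines are not closed; moreover, their sides approach the line $C_1C_2$ in one direction and diverge to infinity in the other direction.
   Context: The singular dual conic given by $C_1,C_2$ is the union of the pencils of lines through $C_1$ and through $C_2$ (lines through $C_2$ are lines parallel to a fixed direction). A polygonal line is inscribed in $g_1\cup g_2$ and circumscribed about this dual conic if its vertices lie alternately on $g_1$ and $g_2$ and its side lines pass alternately through $C_1$ and $C_2$; it is closed if its vertex sequence is periodic. *)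

(* Defs.v *)
From HB Require Import structures.
From mathcomp Require Import all_boot all_order all_algebra.
From mathcomp Require Import reals.
Set Implicit Arguments. Unset Strict Implicit. Unset Printing Implicit Defensive.
Import Order.TTheory GRing.Theory Num.Theory.
Local Open Scope ring_scope.

Definition point (R : realType) := (R * R)%type.

Section Defs.
Variable R : realType.
Implicit Types (P Q X C n d u : point R) (c : R).

Definition vsub P Q : point R := (P.1 - Q.1, P.2 - Q.2).
Definition det2 u (v : point R) : R := u.1 * v.2 - u.2 * v.1.
Definition dot u (v : point R) : R := u.1 * v.1 + u.2 * v.2.
Definition enorm u : R := Num.sqrt (u.1 ^+ 2 + u.2 ^+ 2).
Definition edist P Q : R := enorm (vsub P Q).

Definition aline n c : point R -> Prop := fun X => dot n X = c.
Definition dist_to_aline P n c : R := `|dot n P - c| / enorm n.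
Definition line_through P Q : point R -> Prop :=
  fun X => det2 (vsub Q P) (vsub X P) = 0.
(* the line joining the affine point C and the point at infinity of
   direction d (i.e. the line through C parallel to d) *)
Definition line_dir C d : point R -> Prop := fun X => det2 d (vsub X C) = 0.
(* the line PQ passes through the point at infinity of direction d *)
Definition passes_inf P Q d : Prop := det2 (vsub Q P) d = 0.

(* A polygonal line: a set of consecutive integer indices [pl_dom]
   (an integer interval, possibly infinite in one or both directions),
   vertices [pl_V k] for k in the domain, and two parities:
   vertex k lies on g1 iff  odd|k| (+) pl_b = false (else on g2);
   side (k,k+1) passes through C1 iff odd|k| (+) pl_e = false
   (else through C2).  *)
Record polyline := PolyLine {
  pl_dom : int -> Prop;
  pl_V : int -> point R;
  pl_b : bool;
  pl_e : bool }.

Variables (n : point R) (c1 c2 : R) (C1 d : point R).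
(* g1 = aline n c1, g2 = aline n c2 (parallel), C1 affine point,
   C2 = point at infinity of direction d. *)

Definition is_polyline (pl : polyline) : Prop :=
  [/\ exists k, pl_dom pl k,
      (forall i j k : int, pl_dom pl i -> pl_dom pl k -> i <= j <= k -> pl_dom pl j),
      (forall k, pl_dom pl k ->
         aline n (if odd `|k|%N (+) pl_b pl then c2 else c1) (pl_V pl k)),
      (forall k, pl_dom pl k -> pl_dom pl (k + 1) ->
         if odd `|k|%N (+) pl_e pl
         then passes_inf (pl_V pl k) (pl_V pl (k + 1)) d
         else line_through (pl_V pl k) (pl_V pl (k + 1)) C1) &
      (* consecutive sides are distinct lines (the two different tangents
         from a vertex to the singular dual conic) *)
      (forall k, pl_dom pl (k - 1) -> pl_dom pl k -> pl_dom pl (k + 1) ->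
         ~ (forall X, line_through (pl_V pl (k - 1)) (pl_V pl k) X <->
                      line_through (pl_V pl k) (pl_V pl (k + 1)) X))].

Definition maximal_polyline (pl : polyline) : Prop :=
  forall pl' : polyline, is_polyline pl' ->
    pl_b pl' = pl_b pl -> pl_e pl' = pl_e pl ->
    (forall k, pl_dom pl k -> pl_dom pl' k /\ pl_V pl' k = pl_V pl k) ->
    forall k, pl_dom pl' k -> pl_dom pl k.

End Defs.

Definition finite_polyline (R : realType) (pl : polyline R) : Prop :=
  exists N : nat, forall k, pl_dom pl k -> (`|k| <= N)%N.

Definition closed_polyline (R : realType) (pl : polyline R) : Prop :=
  exists p : int, 0 < p /\
    forall k, pl_dom pl k -> pl_dom pl (k + p) /\ pl_V pl (k + p) = pl_V pl k.

Definition seq_cvg_to (R : realType) (u : nat -> point R) (X : point R) : Prop :=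
  forall eps : R, 0 < eps -> exists N : nat, forall k, (N <= k)%N -> edist (u k) X < eps.

Definition seq_diverges (R : realType) (u : nat -> point R) : Prop :=
  forall M : R, exists N : nat, forall k, (N <= k)%N -> M < enorm (u k).

(* the sides approach the line L: consecutive vertices (of the two kinds)
   converge to points X, Y of L, so the sides converge to the segment XY of L *)
Definition sides_approach (R : realType) (V : nat -> point R) (L : point R -> Prop) : Prop :=
  exists X Y, L X /\ L Y /\
    seq_cvg_to (fun k => V (2 * k)%N) X /\ seq_cvg_to (fun k => V (2 * k + 1)%N) Y.

(* Main.v *)
Require Import Defs.
From HB Require Import structures.
From mathcomp Require Import all_boot all_order all_algebra.
From mathcomp Require Import reals.
From mathcomp Require Import ring lra zify.
Import Order.TTheory GRing.Theory Num.Theory.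
Local Open Scope ring_scope.

Lemma diff0 {R : realType} {x y z : R} : x - y = z -> z = 0 -> x = y.
Proof. by move=> H Hz; apply/eqP; rewrite -subr_eq0 H Hz. Qed.

Lemma oddS (k : int) : odd (absz (k+1)) = ~~ odd (absz k).
Proof.
have : absz (k + 1) = (absz k).+1 \/ absz k = (absz (k+1)).+1 by lia.
by case=> ->; rewrite /= ?negbK.
Qed.

Section Geo.
Variables (R : realType) (n : point R) (c1 c2 : R) (C1 d : point R).
Hypothesis nd0 : dot n d != 0.

Definition sC (X : point R) := det2 d (vsub X C1).
Definition tt (X : point R) := dot n X.

Lemma sC1 : sC C1 = 0.
Proof. rewrite /sC /det2 /vsub /=; ring. Qed.

Lemma L_lt (P Q X : point R) : line_through P Q X <->
  (tt Q - tt P) * (sC X - sC P) - (sC Q - sC P) * (tt X - tt P) = 0.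
Proof.
have E : (tt Q - tt P) * (sC X - sC P) - (sC Q - sC P) * (tt X - tt P)
   = dot n d * det2 (vsub Q P) (vsub X P).
  rewrite /tt /sC /dot /det2 /vsub /=; ring.
rewrite E /line_through; split; first by move=> ->; rewrite mulr0.
by move/eqP; rewrite mulf_eq0 (negbTE nd0) /= => /eqP.
Qed.

Lemma stepC1 {P Q : point R} : line_through P Q C1 ->
  sC Q * (tt C1 - tt P) = sC P * (tt C1 - tt Q).
Proof.
move/L_lt; rewrite sC1 => H; symmetry; apply: (diff0 _ H).
rewrite /tt /sC /dot /det2 /vsub /=. ring.
Qed.

Lemma stepd {P Q : point R} : passes_inf P Q d -> sC Q = sC P.
Proof.
rewrite /passes_inf => H; apply: (diff0 (z := - det2 (vsub Q P) d)); last by rewrite H oppr0.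
rewrite /sC /det2 /vsub /=; ring.
Qed.

Lemma lt_sym (P Q X : point R) : line_through P Q X -> line_through Q P X.
Proof.
rewrite /line_through => H; apply: (diff0 (z := - det2 (vsub Q P) (vsub X P))); last by rewrite H oppr0.
rewrite /det2 /vsub /=; ring.
Qed.

Lemma pi_sym (P Q : point R) : passes_inf P Q d -> passes_inf Q P d.
Proof.
rewrite /passes_inf => H; apply: (diff0 (z := - det2 (vsub Q P) d)); last by rewrite H oppr0.
rewrite /det2 /vsub /=; ring.
Qed.

Lemma same_line (A B C : point R) : tt A != tt B -> tt C != tt B ->
  sC A = 0 -> sC B = 0 -> sC C = 0 ->
  forall X, line_through A B X <-> line_through B C X.
Proof.
move=> hAB hCB sA sB sCC X; rewrite !L_lt sA sB sCC !subrr !subr0 !mul0r !subr0.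
have hBA : tt B - tt A != 0 by rewrite subr_eq0 eq_sym.
have hCB' : tt C - tt B != 0 by rewrite subr_eq0.
split; move/eqP; rewrite mulf_eq0 ?(negbTE hBA) ?(negbTE hCB') /= => /eqP ->; by rewrite mulr0.
Qed.

Lemma distinct_sides (A B C : point R) : tt A != tt B -> tt C != tt B -> sC B != 0 ->
  ((passes_inf A B d /\ line_through B C C1) \/
   (line_through A B C1 /\ passes_inf B C d)) ->
  ~ (forall X, line_through A B X <-> line_through B C X).
Proof.
move=> hAB hCB sB [[h1 h2]|[h1 h2]] H.
- have := stepC1 ((H C1).2 h2); rewrite -(stepd h1) => E.
  have : sC B * (tt B - tt A) = 0.
    rewrite (_ : _ * _ = sC B * (tt C1 - tt A) - sC B * (tt C1 - tt B)); last by ring.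
    by rewrite E subrr.
  move/eqP; rewrite mulf_eq0 (negbTE sB) subr_eq0 eq_sym (negbTE hAB) //.
- have := stepC1 ((H C1).1 h1); rewrite (stepd h2) => E.
  have : sC B * (tt C - tt B) = 0.
    rewrite (_ : _ * _ = sC B * (tt C1 - tt B) - sC B * (tt C1 - tt C)); last by ring.
    by rewrite E subrr.
  move/eqP; rewrite mulf_eq0 (negbTE sB) subr_eq0 (negbTE hCB) //.
Qed.

Definition nextD (P : point R) (c : R) : point R :=
  (P.1 + (c - tt P) / dot n d * d.1, P.2 + (c - tt P) / dot n d * d.2).
Definition nextC (P : point R) (c : R) : point R :=
  (C1.1 + (c - tt C1) / (tt P - tt C1) * (P.1 - C1.1),
   C1.2 + (c - tt C1) / (tt P - tt C1) * (P.2 - C1.2)).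

Lemma nextD_t (P : point R) (c : R) : tt (nextD P c) = c.
Proof.
have -> : tt (nextD P c) = tt P + (c - tt P) / dot n d * dot n d.
  rewrite /nextD /tt /dot /=; ring.
by rewrite divfK // addrC subrK.
Qed.

Lemma nextD_pi (P : point R) (c : R) : passes_inf P (nextD P c) d.
Proof. rewrite /passes_inf /nextD /tt /dot /det2 /vsub /=; ring. Qed.

Lemma nextC_t (P : point R) (c : R) : tt P != tt C1 -> tt (nextC P c) = c.
Proof.
move=> h.
have -> : tt (nextC P c) = tt C1 + (c - tt C1) / (tt P - tt C1) * (tt P - tt C1).
  rewrite /nextC /tt /dot /=; ring.
by rewrite divfK ?subr_eq0 // addrC subrK.
Qed.

Lemma nextC_lt (P : point R) (c : R) : line_through P (nextC P c) C1.
Proof. rewrite /line_through /nextC /tt /dot /det2 /vsub /=; ring. Qed.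


Hypothesis c12 : c1 != c2.
Hypothesis t01 : tt C1 != c1.
Hypothesis t02 : tt C1 != c2.

Definition cpar (x : bool) := if x then c2 else c1.

Lemma cpar_t0 x : cpar x != tt C1.
Proof. by case: x; rewrite /cpar eq_sym. Qed.

Lemma cpar_neq x : cpar (~~ x) != cpar x.
Proof. by case: x; rewrite /cpar // eq_sym. Qed.

Notation isp := (is_polyline n c1 c2 C1 d).
Notation ismax := (maximal_polyline n c1 c2 C1 d).

Lemma vt {pl k} : isp pl -> pl_dom pl k -> tt (pl_V pl k) = cpar (odd (absz k) (+) pl_b pl).
Proof. by case=> _ _ Hv _ _ /Hv. Qed.

Lemma vt_t0 {pl k} : isp pl -> pl_dom pl k -> tt (pl_V pl k) != tt C1.
Proof. by move=> H Dk; rewrite (vt H Dk) cpar_t0. Qed.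

Lemma vt_ne {pl a b} : isp pl -> b = a + 1 -> pl_dom pl a -> pl_dom pl b ->
  tt (pl_V pl b) != tt (pl_V pl a).
Proof.
by move=> H -> Da Db; rewrite (vt H Da) (vt H Db) oddS addNb cpar_neq.
Qed.

Lemma side {pl k} : isp pl -> pl_dom pl k -> pl_dom pl (k + 1) ->
  if odd (absz k) (+) pl_e pl
  then passes_inf (pl_V pl k) (pl_V pl (k + 1)) d
  else line_through (pl_V pl k) (pl_V pl (k + 1)) C1.
Proof. by case=> _ _ _ Hs _; apply: Hs. Qed.

Lemma s_prop {pl a b} : isp pl -> b = a + 1 -> pl_dom pl a -> pl_dom pl b ->
  (sC (pl_V pl b) == 0) = (sC (pl_V pl a) == 0).
Proof.
move=> H Eb Da Db; have := side H Da; rewrite -Eb => /(_ Db).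
case: ifP => _ HS; first by rewrite (stepd HS).
have E := stepC1 HS.
have h1 : tt C1 - tt (pl_V pl a) != 0 by rewrite subr_eq0 eq_sym (vt_t0 H Da).
have h2 : tt C1 - tt (pl_V pl b) != 0 by rewrite subr_eq0 eq_sym (vt_t0 H Db).
apply/idP/idP => /eqP h.
- by move: E; rewrite h mul0r => /esym/eqP; rewrite mulf_eq0 (negbTE h2) orbF.
- by move: E; rewrite h mul0r => /eqP; rewrite mulf_eq0 (negbTE h1) orbF.
Qed.

Lemma dist_at {pl a b c} : isp pl -> b = a + 1 -> c = a + 1 + 1 ->
  pl_dom pl a -> pl_dom pl b -> pl_dom pl c ->
  ~ (forall X, line_through (pl_V pl a) (pl_V pl b) X <->
               line_through (pl_V pl b) (pl_V pl c) X).
Proof.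
case=> _ _ _ _ Hd -> -> Da Db Dc.
by have := Hd (a + 1); rewrite addrK; apply.
Qed.

Lemma LemB {pl k j} : isp pl -> pl_dom pl k -> sC (pl_V pl k) = 0 -> pl_dom pl j ->
  k - 1 <= j <= k + 1.
Proof.
move=> H Dk sk Dj; have [_ Hint _ _ _] := H.
have zero_step : forall a b, b = a + 1 -> pl_dom pl a -> pl_dom pl b ->
    (sC (pl_V pl b) = 0 <-> sC (pl_V pl a) = 0).
  by move=> a b Eb Da Db; have E := s_prop H Eb Da Db; split => /eqP; [rewrite E|rewrite -E] => /eqP.
apply/andP; split; rewrite leNgt; apply/negP => hlt.
- set a := k - 1 - 1.
  have Ek : k = a + 1 + 1 by rewrite /a; lia.
  have Da : pl_dom pl a by apply: (Hint j a k) => //; rewrite /a; lia.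
  have Da1 : pl_dom pl (a + 1) by apply: (Hint j (a+1) k) => //; rewrite /a; lia.
  have Dk' : pl_dom pl (a + 1 + 1) by rewrite -Ek.
  have s1 : sC (pl_V pl (a + 1)) = 0 by apply/(zero_step _ _ erefl Da1 Dk'); rewrite -Ek.
  have s0 : sC (pl_V pl a) = 0 by apply/(zero_step _ _ erefl Da Da1).
  apply: (dist_at H erefl erefl Da Da1 Dk').
  apply: same_line.
  + by rewrite eq_sym (vt_ne H erefl Da Da1).
  + exact: (vt_ne H erefl Da1 Dk').
  + exact: s0.
  + exact: s1.
  + by rewrite -Ek.
- have Dk1 : pl_dom pl (k + 1) by apply: (Hint k (k+1) j) => //; lia.
  have Dk2 : pl_dom pl (k + 1 + 1) by apply: (Hint k (k+1+1) j) => //; lia.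
  have s1 : sC (pl_V pl (k + 1)) = 0 by apply/(zero_step _ _ erefl Dk Dk1).
  have s2 : sC (pl_V pl (k + 1 + 1)) = 0 by apply/(zero_step _ _ erefl Dk1 Dk2).
  apply: (dist_at H erefl erefl Dk Dk1 Dk2).
  apply: same_line => //.
  + by rewrite eq_sym (vt_ne H erefl Dk Dk1).
  + exact: (vt_ne H erefl Dk1 Dk2).
Qed.


Lemma ext_up {pl M} : isp pl -> pl_dom pl M -> ~ pl_dom pl (M + 1) ->
  (pl_dom pl (M - 1) -> sC (pl_V pl M) != 0) ->
  exists pl', isp pl' /\ pl_b pl' = pl_b pl /\ pl_e pl' = pl_e pl /\
    (forall k, pl_dom pl k -> pl_dom pl' k /\ pl_V pl' k = pl_V pl k) /\
    pl_dom pl' (M + 1).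
Proof.
move=> H DM nDM1 Hsn; have [Hne Hint Hv Hs Hd] := H.
set D := pl_dom pl in Hne Hint Hv Hs Hd DM nDM1 Hsn *.
set V := pl_V pl in Hv Hs Hd Hsn *.
set b := pl_b pl in Hv *; set e := pl_e pl in Hs *.
set c' := cpar (odd (absz (M + 1)) (+) b).
set Q := if odd (absz M) (+) e then nextD (V M) c' else nextC (V M) c'.
have hub : forall k, D k -> k <= M.
  move=> k Dk; rewrite leNgt; apply/negP => hlt; apply: nDM1.
  by apply: (Hint M (M + 1) k) => //; lia.
have V'old : forall k, D k -> (if k == M + 1 then Q else V k) = V k.
  by move=> k Dk; case: eqP => // Ek; rewrite Ek in Dk.
exists (PolyLine (fun k => D k \/ k = M + 1) (fun k => if k == M + 1 then Q else V k) b e).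
split; last first.
  split=> //; split=> //; split; last by right.
  by move=> k Dk; split; [left|exact: V'old].
split => /=.
- by exists (M + 1); right.
- move=> i j k [Di|->] [Dk|->] hijk.
  + by left; exact: (Hint i j k).
  + case: (j =P M + 1) => [->|hj]; [by right|left].
    by apply: (Hint i j M) => //; lia.
  + by exfalso; have := hub k Dk; lia.
  + by right; lia.
- move=> k [Dk|->].
  + by rewrite V'old //; exact: Hv.
  + rewrite eqxx /aline /Q; case: ifP => _.
    * exact: nextD_t.
    * by apply: nextC_t; apply: (vt_t0 H DM).
- move=> k [Dk|Ek] [Dk1|Ek1].
  + by rewrite !V'old //; exact: Hs.
  + have EkM : k = M by lia.
    rewrite V'old // Ek1 eqxx EkM /Q.
    by case: (odd (absz M) (+) e); [exact: nextD_pi | exact: nextC_lt].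
  + by exfalso; have := hub _ Dk1; lia.
  + by exfalso; lia.
- move=> k Dkm Dk [Dk1|Ek1].
  + have Dk' : D k by case: Dk => // Ek; exfalso; have := hub _ Dk1; lia.
    have Dkm' : D (k - 1) by case: Dkm => // Ek; exfalso; have := hub _ Dk1; lia.
    by rewrite !V'old //; exact: Hd.
  + have EkM : k = M by lia.
    subst k.
    have DM1 : D (M - 1) by case: Dkm => // Ek; exfalso; lia.
    rewrite (V'old (M - 1)) // (V'old M) // eqxx.
    have hpar : odd (absz M) = ~~ odd (absz (M - 1)) by rewrite -oddS subrK.
    have HS := Hs (M - 1) DM1; rewrite subrK in HS; have {}HS := HS DM.
    have tQ : tt Q = c'.
      rewrite /Q; case: (odd (absz M) (+) e); [exact: nextD_t | by apply: nextC_t; apply: (vt_t0 H DM)].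
    apply: distinct_sides.
    * by rewrite eq_sym (vt_ne H (esym (subrK 1 M)) DM1 DM).
    * by rewrite tQ /c' (vt H DM) oddS addNb cpar_neq.
    * exact: Hsn.
    * rewrite /Q hpar addNb; move: HS.
      case: (odd (absz (M - 1)) (+) e) => /= HS.
      - by left; split => //; exact: nextC_lt.
      - by right; split => //; exact: nextD_pi.
Qed.


Lemma ext_down {pl M} : isp pl -> pl_dom pl M -> ~ pl_dom pl (M - 1) ->
  (pl_dom pl (M + 1) -> sC (pl_V pl M) != 0) ->
  exists pl', isp pl' /\ pl_b pl' = pl_b pl /\ pl_e pl' = pl_e pl /\
    (forall k, pl_dom pl k -> pl_dom pl' k /\ pl_V pl' k = pl_V pl k) /\
    pl_dom pl' (M - 1).
Proof.
move=> H DM nDM1 Hsn; have [Hne Hint Hv Hs Hd] := H.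
set D := pl_dom pl in Hne Hint Hv Hs Hd DM nDM1 Hsn *.
set V := pl_V pl in Hv Hs Hd Hsn *.
set b := pl_b pl in Hv *; set e := pl_e pl in Hs *.
set c' := cpar (odd (absz (M - 1)) (+) b).
set Q := if odd (absz (M - 1)) (+) e then nextD (V M) c' else nextC (V M) c'.
have hlb : forall k, D k -> M <= k.
  move=> k Dk; rewrite leNgt; apply/negP => hlt; apply: nDM1.
  by apply: (Hint k (M - 1) M) => //; lia.
have V'old : forall k, D k -> (if k == M - 1 then Q else V k) = V k.
  by move=> k Dk; case: eqP => // Ek; rewrite Ek in Dk.
have tQ : tt Q = c'.
  rewrite /Q; case: (odd (absz (M - 1)) (+) e); [exact: nextD_t | by apply: nextC_t; apply: (vt_t0 H DM)].
exists (PolyLine (fun k => D k \/ k = M - 1) (fun k => if k == M - 1 then Q else V k) b e).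
split; last first.
  split=> //; split=> //; split; last by right.
  by move=> k Dk; split; [left|exact: V'old].
split => /=.
- by exists (M - 1); right.
- move=> i j k [Di|->] [Dk|->] hijk.
  + by left; exact: (Hint i j k).
  + by exfalso; have := hlb i Di; lia.
  + case: (j =P M - 1) => [->|hj]; [by right|left].
    by apply: (Hint M j k) => //; lia.
  + by right; lia.
- move=> k [Dk|->].
  + by rewrite V'old //; exact: Hv.
  + by rewrite eqxx /aline; exact: tQ.
- move=> k [Dk|Ek] [Dk1|Ek1].
  + by rewrite !V'old //; exact: Hs.
  + by exfalso; have := hlb _ Dk; lia.
  + have EkM : k + 1 = M by lia.
    rewrite EkM (V'old M) // Ek eqxx /Q.
    case: (odd (absz (M - 1)) (+) e).
    * by apply: pi_sym; exact: nextD_pi.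
    * by apply: lt_sym; exact: nextC_lt.
  + by exfalso; lia.
- move=> k Dkm [Dk|Ek] Dk1.
  + have Dk1' : D (k + 1) by case: Dk1 => // Ek; exfalso; have := hlb _ Dk; lia.
    case: Dkm => [Dkm|Ekm].
    * by rewrite !V'old //; exact: Hd.
    * have EkM : k = M by lia.
      subst k.
      rewrite Ekm eqxx (V'old M) // (V'old (M + 1)) //.
      have hpar : odd (absz M) = ~~ odd (absz (M - 1)) by rewrite -oddS subrK.
      have HS := Hs M DM Dk1'.
      apply: distinct_sides.
      - by rewrite tQ /c' (vt H DM) hpar addNb eq_sym cpar_neq.
      - exact: (vt_ne H erefl DM Dk1').
      - exact: Hsn.
      - move: HS; rewrite /Q hpar addNb.
        case: (odd (absz (M - 1)) (+) e) => /= HS.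
        + by left; split => //; apply: pi_sym; exact: nextD_pi.
        + by right; split => //; apply: lt_sym; exact: nextC_lt.
  + by exfalso; case: Dkm => [Dkm|Ekm]; [have := hlb _ Dkm|]; lia.
Qed.


Lemma max_up {pl M} : isp pl -> ismax pl -> pl_dom pl M -> ~ pl_dom pl (M + 1) ->
  pl_dom pl (M - 1) /\ sC (pl_V pl M) = 0.
Proof.
move=> H Hm DM nDM1.
case: (boolp.pselect (pl_dom pl (M - 1) /\ sC (pl_V pl M) = 0)) => // hn; exfalso.
have Hsn : pl_dom pl (M - 1) -> sC (pl_V pl M) != 0.
  by move=> h; apply/eqP => hs; apply: hn.
have [pl' [H' [Eb [Ee [Hext Dn]]]]] := ext_up H DM nDM1 Hsn.
by apply: nDM1; apply: (Hm pl' H' Eb Ee Hext).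
Qed.

Lemma max_dn {pl M} : isp pl -> ismax pl -> pl_dom pl M -> ~ pl_dom pl (M - 1) ->
  pl_dom pl (M + 1) /\ sC (pl_V pl M) = 0.
Proof.
move=> H Hm DM nDM1.
case: (boolp.pselect (pl_dom pl (M + 1) /\ sC (pl_V pl M) = 0)) => // hn; exfalso.
have Hsn : pl_dom pl (M + 1) -> sC (pl_V pl M) != 0.
  by move=> h; apply/eqP => hs; apply: hn.
have [pl' [H' [Eb [Ee [Hext Dn]]]]] := ext_down H DM nDM1 Hsn.
by apply: nDM1; apply: (Hm pl' H' Eb Ee Hext).
Qed.

Lemma max_succ {pl k} : isp pl -> ismax pl -> pl_dom pl k -> sC (pl_V pl k) != 0 ->
  pl_dom pl (k + 1) /\ sC (pl_V pl (k + 1)) != 0.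
Proof.
move=> H Hm Dk sk.
have Dk1 : pl_dom pl (k + 1).
  case: (boolp.pselect (pl_dom pl (k + 1))) => // h.
  by have [_ hs] := max_up H Hm Dk h; rewrite hs eqxx in sk.
by split => //; rewrite (s_prop H erefl Dk Dk1).
Qed.

Lemma max_pred {pl k} : isp pl -> ismax pl -> pl_dom pl k -> sC (pl_V pl k) != 0 ->
  pl_dom pl (k - 1) /\ sC (pl_V pl (k - 1)) != 0.
Proof.
move=> H Hm Dk sk.
have Dk1 : pl_dom pl (k - 1).
  case: (boolp.pselect (pl_dom pl (k - 1))) => // h.
  by have [_ hs] := max_dn H Hm Dk h; rewrite hs eqxx in sk.
by split => //; rewrite -(s_prop H (esym (subrK 1 k)) Dk1 Dk).
Qed.

Lemma all_dom {pl k0} : isp pl -> ismax pl -> pl_dom pl k0 -> sC (pl_V pl k0) != 0 ->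
  forall k, pl_dom pl k /\ sC (pl_V pl k) != 0.
Proof.
move=> H Hm Dk0 sk0.
have up : forall i : nat, pl_dom pl (k0 + (i : int)) /\ sC (pl_V pl (k0 + (i : int))) != 0.
  elim=> [|i [IH1 IH2]]; first by rewrite addr0.
  have -> : k0 + (i.+1 : int) = k0 + (i : int) + 1 by lia.
  exact: max_succ.
have dn : forall i : nat, pl_dom pl (k0 - (i : int)) /\ sC (pl_V pl (k0 - (i : int))) != 0.
  elim=> [|i [IH1 IH2]]; first by rewrite subr0.
  have -> : k0 - (i.+1 : int) = k0 - (i : int) - 1 by lia.
  exact: max_pred.
move=> k.
have [i [->|->]] : exists i : nat, k = k0 + (i : int) \/ k = k0 - (i : int).
  by exists (absz (k - k0)); lia.
- exact: up.
- exact: dn.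
Qed.

Lemma part_i_exists : exists pl : polyline R, isp pl /\ ismax pl /\ finite_polyline pl.
Proof.
have sD : forall c, sC (nextD C1 c) = 0 by move=> c; rewrite (stepd (nextD_pi C1 c)) sC1.
set pl0 := PolyLine (fun k : int => k = 0 \/ k = 1)
   (fun k => if k == 0 then nextD C1 c1 else nextD C1 c2) false false.
have H : isp pl0.
  split => /=.
  - by exists 0; left.
  - by move=> i j k [->|->] [->|->] h; lia.
  - move=> k [->|->] /=; rewrite /aline; exact: nextD_t.
  - move=> k [->|->] [h|h] /=; try (exfalso; lia).
    by apply/L_lt; rewrite !sD sC1 subrr mulr0 mul0r subrr.
  - by move=> k [h|h] [h'|h'] [h''|h'']; exfalso; lia.
exists pl0; split => //; split.
- move=> pl' H' Eb Ee Hext k Dk.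
  have [D0 V0] := Hext 0 (or_introl erefl).
  have [D1 V1] := Hext 1 (or_intror erefl).
  have s0 : sC (pl_V pl' 0) = 0 by rewrite V0 /= sD.
  have s1 : sC (pl_V pl' 1) = 0 by rewrite V1 /= sD.
  have := LemB H' D0 s0 Dk; have := LemB H' D1 s1 Dk => /=; lia.
- by exists 1%N => k [->|->].
Qed.


Lemma geoInf {r : R} : 1 < r -> forall M : R, exists N : nat, forall k, (N <= k)%N -> M < r ^+ k.
Proof.
move=> r1 M.
have bern : forall k : nat, 1 + k%:R * (r - 1) <= r ^+ k.
  elim=> [|k IH]; first by rewrite mul0r addr0 expr0.
  rewrite exprS -natr1.
  have k0 : 0 <= (k%:R : R) by apply: ler0n.
  have h1 := ler_wpM2l (ltW (lt_trans ltr01 r1)) IH.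
  have h2 : 0 <= k%:R * ((r - 1) * (r - 1)) by apply: mulr_ge0 => //; apply: mulr_ge0; rewrite subr_ge0 ltW.
  nra.
set x := `|M| / (r - 1).
have x0 : 0 <= x by rewrite /x divr_ge0 // ?normr_ge0 // subr_ge0 ltW.
have hx := archi_boundP x0.
exists (Num.Def.archi_bound x) => k hk.
have hk' : ((Num.Def.archi_bound x)%:R : R) <= k%:R by rewrite ler_nat.
have hM : `|M| = x * (r - 1) by rewrite /x divfK // subr_eq0 gt_eqF.
have := bern k; have := ler_norm M.
nra.
Qed.

Lemma geo0 (q A eps : R) : 0 < q -> q < 1 -> 0 < eps ->
  exists N : nat, forall k, (N <= k)%N -> A * q ^+ k < eps.
Proof.
move=> q0 q1 e0.
have r1 : 1 < q^-1 by rewrite invf_gt1.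
have [N HN] := geoInf r1 (A / eps).
exists N => k /HN hk.
have qk : q ^+ k = (q^-1 ^+ k)^-1 by rewrite exprVn invrK.
have rk0 : 0 < q^-1 ^+ k by apply: exprn_gt0; rewrite invr_gt0.
rewrite ltr_pdivrMr // in hk.
by rewrite qk ltr_pdivrMr // mulrC.
Qed.

Lemma coord_le (X : point R) : `|X.1| <= enorm X /\ `|X.2| <= enorm X.
Proof.
rewrite /enorm -!sqrtr_sqr; split; apply: ler_wsqrtr.
- by rewrite lerDl sqr_ge0.
- by rewrite lerDr sqr_ge0.
Qed.

Lemma sqrt_le_sum (a b : R) : Num.sqrt (a ^+ 2 + b ^+ 2) <= `|a| + `|b|.
Proof.
have h0 : 0 <= `|a| + `|b| by rewrite addr_ge0.
rewrite -(ger0_norm h0) -sqrtr_sqr; apply: ler_wsqrtr.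
rewrite -(real_normK (num_real a)) -(real_normK (num_real b)).
have := normr_ge0 a; have := normr_ge0 b; nra.
Qed.

Lemma aux_id (a b s c : R) : a * s / c + b * s / c = (b + a) / c * s.
Proof. ring. Qed.

Lemma edist_s (P Q : point R) : tt P = tt Q ->
  edist P Q <= (`|n.1| + `|n.2|) / `|dot n d| * `|sC P - sC Q|.
Proof.
move=> hPQ.
have E1 : P.1 - Q.1 = - n.2 * (sC P - sC Q) / dot n d.
  apply: (mulIf nd0); rewrite divfK //.
  apply: (diff0 (z := d.1 * (tt P - tt Q))); last by rewrite hPQ subrr mulr0.
  rewrite /sC /tt /dot /det2 /vsub /=; ring.
have E2 : P.2 - Q.2 = n.1 * (sC P - sC Q) / dot n d.
  apply: (mulIf nd0); rewrite divfK //.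
  apply: (diff0 (z := d.2 * (tt P - tt Q))); last by rewrite hPQ subrr mulr0.
  rewrite /sC /tt /dot /det2 /vsub /=; ring.
apply: le_trans (sqrt_le_sum _ _) _.
rewrite /= E1 E2 !normrM !normfV normrN le_eqVlt; apply/orP; left; apply/eqP.
by rewrite aux_id.
Qed.

Lemma sC_bound (X : point R) :
  `|sC X| <= (`|d.1| + `|d.2| + 1) * (enorm X + (`|C1.1| + `|C1.2|)).
Proof.
have [h1 h2] := coord_le X.
rewrite /sC /det2 /vsub /=.
have e1 := ler_normB (d.1 * (X.2 - C1.2)) (d.2 * (X.1 - C1.1)).
rewrite !normrM in e1.
have f1 := ler_normB X.2 C1.2.
have f2 := ler_normB X.1 C1.1.
have := normr_ge0 d.1; have := normr_ge0 d.2; have := normr_ge0 C1.1; have := normr_ge0 C1.2.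
have := normr_ge0 (X.1 - C1.1); have := normr_ge0 (X.2 - C1.2).
have := normr_ge0 X.1; have := normr_ge0 X.2.
nra.
Qed.


Lemma part_i_uniq pl : isp pl -> ismax pl -> finite_polyline pl ->
  exists m : int, (forall k, pl_dom pl k <-> k = m \/ k = m + 1) /\
    line_dir C1 d (pl_V pl m) /\ line_dir C1 d (pl_V pl (m + 1)).
Proof.
move=> H Hm [N HN]; have [[k0 Dk0] Hint _ _ _] := H.
have [M [DM nDM1]] : exists M, pl_dom pl M /\ ~ pl_dom pl (M + 1).
  case: (boolp.pselect (exists M, pl_dom pl M /\ ~ pl_dom pl (M + 1))) => // hno; exfalso.
  have step : forall M, pl_dom pl M -> pl_dom pl (M + 1).
    move=> M DM; case: (boolp.pselect (pl_dom pl (M + 1))) => // h; exfalso; apply: hno.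
    by exists M.
  have up : forall i : nat, pl_dom pl (k0 + (i : int)).
    elim=> [|i IH]; first by rewrite addr0.
    have -> : k0 + (i.+1 : int) = k0 + (i : int) + 1 by lia.
    exact: step.
  have := HN _ (up (N + absz k0).+1); lia.
have [DM1 sM] := max_up H Hm DM nDM1.
exists (M - 1); rewrite subrK; split; [|split].
- move=> k; split.
  + move=> Dk; have := LemB H DM sM Dk => hk.
    case: (k =P M + 1) => [Ek|nk]; first by rewrite Ek in Dk.
    lia.
  + by case=> ->.
- change (sC (pl_V pl (M - 1)) = 0).
  by apply/eqP; rewrite -(s_prop H (esym (subrK 1 M)) DM1 DM); apply/eqP.
- exact: sM.
Qed.

Definition mu (b e : bool) := (tt C1 - cpar (~~ e (+) b)) / (tt C1 - cpar (e (+) b)).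

Lemma solve1 {x y a c : R} : x * a = y * c -> a != 0 -> x = c / a * y.
Proof. by move=> E a0; apply: (mulIf a0); rewrite mulrAC divfK // E mulrC. Qed.

Lemma nzc x : tt C1 - cpar x != 0.
Proof. by rewrite subr_eq0 eq_sym cpar_t0. Qed.

Lemma rec2 {pl k} : isp pl -> pl_dom pl k -> pl_dom pl (k + 1) -> pl_dom pl (k + 1 + 1) ->
  sC (pl_V pl (k + 1 + 1)) = mu (pl_b pl) (pl_e pl) * sC (pl_V pl k).
Proof.
move=> H D0 D1 D2.
have S0 := side H D0 D1; have S1 := side H D1 D2.
have T0 := vt H D0; have T1 := vt H D1; have T2 := vt H D2.
rewrite !oddS in S1 T1 T2; rewrite negbK in T2.
move: S0 S1 T0 T1 T2; rewrite /mu.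
case: (odd (absz k)); case: (pl_e pl) => /= S0 S1 T0 T1 T2.
all: first [ have E0 := stepC1 S0; rewrite ?T0 ?T1 in E0; rewrite (stepd S1); exact: (solve1 E0 (nzc _))
           | have E1 := stepC1 S1; rewrite ?T1 ?T2 in E1; rewrite (stepd S0) in E1; exact: (solve1 E1 (nzc _)) ].
Qed.

Lemma tt2 {pl k} : isp pl -> pl_dom pl k -> pl_dom pl (k + 1 + 1) ->
  tt (pl_V pl (k + 1 + 1)) = tt (pl_V pl k).
Proof. by move=> H D0 D2; rewrite (vt H D2) (vt H D0) !oddS negbK. Qed.

Hypothesis hd : `|tt C1 - c1| != `|tt C1 - c2|.

Lemma mu_neq0 b e : mu b e != 0.
Proof. by rewrite /mu mulf_neq0 ?invr_eq0 ?nzc. Qed.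

Lemma mu_norm b e : `|mu b e| != 1.
Proof.
rewrite /mu addNb normrM normfV; case: (e (+) b) => /=; apply/eqP => h.
- have : `|tt C1 - c1| = `|tt C1 - c2|.
    move/(congr1 (fun z => z * `|tt C1 - c2|)): h.
    by rewrite /= divfK ?mul1r // normr_eq0 subr_eq0.
  by move/eqP; rewrite (negbTE hd).
- have : `|tt C1 - c2| = `|tt C1 - c1|.
    move/(congr1 (fun z => z * `|tt C1 - c1|)): h.
    by rewrite /= divfK ?mul1r // normr_eq0 subr_eq0.
  by move/eqP; rewrite eq_sym (negbTE hd).
Qed.


Lemma sD c : sC (nextD C1 c) = 0.
Proof. by rewrite (stepd (nextD_pi C1 c)) sC1. Qed.

Lemma geo_even (W : int -> point R) (m : R) :
  (forall k, sC (W (k + 1 + 1)) = m * sC (W k)) ->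
  forall (a : int) (j : nat), sC (W (a + (2 * j)%N)) = m ^+ j * sC (W a).
Proof.
move=> Hs a; elim=> [|j IH]; first by rewrite addr0 expr0 mul1r.
have -> : a + (2 * j.+1)%N = a + (2 * j)%N + 1 + 1 by lia.
by rewrite Hs IH exprS mulrA.
Qed.

Lemma aux2 (x y z : R) : x * (y * z) = x * z * y.
Proof. ring. Qed.

Lemma conv (W : int -> point R) (m : R) : 0 < `|m| -> `|m| < 1 ->
  (forall k, tt (W (k + 1 + 1)) = tt (W k)) ->
  (forall k, sC (W (k + 1 + 1)) = m * sC (W k)) ->
  (forall k, sC (W k) != 0) ->
  sides_approach (fun k : nat => W k) (line_dir C1 d) /\
  seq_diverges (fun k : nat => W (- (k : int))).
Proof.
move=> m0 m1 Ht Hs Hn.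
have geot : forall (a : int) (j : nat), tt (W (a + (2 * j)%N)) = tt (W a).
  move=> a; elim=> [|j IH]; first by rewrite addr0.
  have -> : a + (2 * j.+1)%N = a + (2 * j)%N + 1 + 1 by lia.
  by rewrite Ht IH.
have cvg : forall a : int, seq_cvg_to (fun j : nat => W (a + (2 * j)%N)) (nextD C1 (tt (W a))).
  move=> a eps e0.
  have [N HN] := geo0 `|m| ((`|n.1| + `|n.2|) / `|dot n d| * `|sC (W a)|) eps m0 m1 e0.
  exists N => j /HN hj.
  have t2 : tt (W (a + (2 * j)%N)) = tt (nextD C1 (tt (W a))) by rewrite geot nextD_t.
  change (edist (W (a + (2 * j)%N)) (nextD C1 (tt (W a))) < eps).
  apply: le_lt_trans (edist_s _ _ t2) _.
  rewrite sD subr0 (geo_even _ _ Hs) normrM normrX.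
  by rewrite aux2.
split.
- exists (nextD C1 (tt (W 0))), (nextD C1 (tt (W 1))).
  split; first exact: sD.
  split; first exact: sD.
  split.
  + move=> eps e0; have [N HN] := cvg 0 eps e0; exists N => k /HN.
    by rewrite add0r.
  + move=> eps e0; have [N HN] := cvg 1 eps e0; exists N => k /HN /=.
    by have -> : ((2 * k + 1)%N : int) = 1 + (2 * k)%N by lia.
- set r := `|m|^-1.
  have r1 : 1 < r by rewrite invf_gt1.
  have r0 : 0 < r by apply: lt_trans r1.
  set B := Num.min `|sC (W 0)| `|sC (W (- (Posz 1)))|.
  have B0 : 0 < B by rewrite lt_min !normr_gt0 !Hn.
  have grow : forall k : nat, B * r ^+ (k./2) <= `|sC (W (- (k : int)))| /\
                              B * r ^+ (k.+1./2) <= `|sC (W (- (k.+1 : int)))|.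
    elim=> [|k [IH1 IH2]].
    + by rewrite /= expr0 mulr1 oppr0; split; rewrite ge_min lexx ?orbT.
    + split; first exact: IH2.
      have := Hs (- (k.+2 : int)).
      rewrite (_ : - (k.+2 : int) + 1 + 1 = - (k : int)); last by lia.
      move=> E.
      have hs : `|sC (W (- (k.+2 : int)))| = r * `|sC (W (- (k : int)))|.
        by rewrite E normrM mulrA mulVf ?mul1r // normr_eq0 -normr_gt0.
      rewrite hs /= exprS mulrCA; apply: ler_wpM2l => //; exact: ltW.
  move=> M.
  set Dp := `|d.1| + `|d.2| + 1; set K0 := `|C1.1| + `|C1.2|.
  have Dp0 : 0 < Dp by rewrite /Dp ltr_wpDl // addr_ge0.
  have [J HJ] := geoInf r1 (Dp * (M + K0) / B).
  exists J.*2 => k hk.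
  have hJ : (J <= k./2)%N by rewrite -(doubleK J) half_leq.
  have h1 := HJ _ hJ.
  rewrite ltr_pdivrMr // [_ * B]mulrC in h1.
  have h2 := (grow k).1.
  have h3 := sC_bound (W (- (k : int))).
  have h4 : Dp * (M + K0) < Dp * (enorm (W (- (k : int))) + K0).
    by apply: lt_le_trans h1 (le_trans h2 h3).
  by rewrite ltr_pM2l // ltrD2r in h4.
Qed.


Lemma part_ii pl : isp pl -> ismax pl -> ~ finite_polyline pl ->
  (forall k, pl_dom pl k) /\ ~ closed_polyline pl /\
      ((sides_approach (fun k : nat => pl_V pl k%:Z) (line_dir C1 d) /\
        seq_diverges (fun k : nat => pl_V pl (- k%:Z))) \/
       (sides_approach (fun k : nat => pl_V pl (- k%:Z)) (line_dir C1 d) /\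
        seq_diverges (fun k : nat => pl_V pl k%:Z))).
Proof.
move=> H Hm nfin.
have [[k0 Dk0] _ _ _ _] := H.
have sk0 : sC (pl_V pl k0) != 0.
  apply/eqP => hs; apply: nfin; exists (absz k0).+1 => k Dk.
  by have := LemB H Dk0 hs Dk; lia.
have ALL := all_dom H Hm Dk0 sk0.
have Dall : forall k, pl_dom pl k by move=> k; exact: (ALL k).1.
have Hn : forall k, sC (pl_V pl k) != 0 by move=> k; exact: (ALL k).2.
set m := mu (pl_b pl) (pl_e pl).
have Hrec : forall k, sC (pl_V pl (k + 1 + 1)) = m * sC (pl_V pl k).
  by move=> k; apply: rec2.
have Htt : forall k, tt (pl_V pl (k + 1 + 1)) = tt (pl_V pl k).
  by move=> k; apply: tt2.
have mn0 : m != 0 by apply: mu_neq0.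
have m0 : 0 < `|m| by rewrite normr_gt0.
split => //; split.
- move=> [p [p0 Hp]]; have [_ Vp] := Hp 0 (Dall 0); rewrite add0r in Vp.
  case hp: (odd (absz p)).
  + have := vt H (Dall p); rewrite hp Vp (vt H (Dall 0)) /= => E.
    by move/eqP: E; rewrite eq_sym (negbTE (cpar_neq _)).
  + set j := (absz p)./2.
    have Ep : p = (2 * j)%N.
      have := odd_double_half (absz p); rewrite hp add0n => E.
      have -> : (2 * j)%N = absz p by rewrite /j mul2n E.
      by lia.
    have := geo_even _ _ Hrec 0 j; rewrite add0r -Ep Vp => E.
    have : (m ^+ j - 1) * sC (pl_V pl 0) = 0 by rewrite mulrBl -E mul1r subrr.
    move/eqP; rewrite mulf_eq0 (negbTE (Hn 0)) orbF subr_eq0 => /eqP E2.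
    have : `|m| ^+ j == 1 by rewrite -normrX E2 normr1.
    rewrite pexprn_eq1 ?normr_ge0 // (negbTE (mu_norm _ _)) orbF => /eqP j0.
    by move: Ep p0; rewrite j0 /= => ->.
- case: (ltgtP `|m| 1) => hm.
  + by left; exact: (conv (pl_V pl) m m0 hm Htt Hrec Hn).
  + right.
    have := conv (fun k => pl_V pl (- k)) m^-1.
    case.
    * by rewrite normfV invr_gt0.
    * by rewrite normfV invf_lt1.
    * move=> k /=; have := Htt (- (k + 1 + 1)).
      by rewrite (_ : - (k + 1 + 1) + 1 + 1 = - k); last by lia.
    * move=> k /=; have := Hrec (- (k + 1 + 1)).
      rewrite (_ : - (k + 1 + 1) + 1 + 1 = - k); last by lia.
      by move=> ->; rewrite mulKf.
    * by move=> k; apply: Hn.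
    * move=> h1 h2; split; first exact: h1.
      move=> M; have [N HN] := h2 M; exists N => k /HN.
      by rewrite /= opprK.
  + by exfalso; move: (mu_norm (pl_b pl) (pl_e pl)); rewrite -/m hm eqxx.
Qed.

End Geo.

Theorem lemma3p14 (R : realType) (n : point R) (c1 c2 : R) (C1 d : point R) :
  n != (0, 0) -> c1 != c2 ->            (* g1, g2 distinct parallel lines *)
  d != (0, 0) ->                        (* C2 = point at infinity of direction d *)
  dot n d != 0 ->                       (* C2 is not the common point at infinity of g1, g2 *)
  ~ aline n c1 C1 -> ~ aline n c2 C1 -> (* C1 does not lie on g1, g2 *)
  dist_to_aline C1 n c1 != dist_to_aline C1 n c2 ->
  (* (i) *)
  ((exists pl : polyline R, is_polyline n c1 c2 C1 d pl /\
      maximal_polyline n c1 c2 C1 d pl /\ finite_polyline pl) /\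
   (forall pl : polyline R, is_polyline n c1 c2 C1 d pl ->
      maximal_polyline n c1 c2 C1 d pl -> finite_polyline pl ->
      exists m : int, (forall k, pl_dom pl k <-> k = m \/ k = m + 1) /\
        line_dir C1 d (pl_V pl m) /\ line_dir C1 d (pl_V pl (m + 1)))) /\
  (* (ii) *)
  (forall pl : polyline R, is_polyline n c1 c2 C1 d pl ->
      maximal_polyline n c1 c2 C1 d pl -> ~ finite_polyline pl ->
      (forall k, pl_dom pl k) /\ ~ closed_polyline pl /\
      ((sides_approach (fun k : nat => pl_V pl k%:Z) (line_dir C1 d) /\
        seq_diverges (fun k : nat => pl_V pl (- k%:Z))) \/
       (sides_approach (fun k : nat => pl_V pl (- k%:Z)) (line_dir C1 d) /\
        seq_diverges (fun k : nat => pl_V pl k%:Z)))).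
Proof.
move=> _ hc _ hnd h1 h2 hdist.
have t01 : dot n C1 != c1 by apply/eqP.
have t02 : dot n C1 != c2 by apply/eqP.
have hd : `|dot n C1 - c1| != `|dot n C1 - c2|.
  by apply/eqP => h; move: hdist; rewrite /dist_to_aline h eqxx.
split; [split|].
- exact: (part_i_exists _ _ _ _ _ _ hnd hc t01 t02).
- move=> pl H Hm Hf; exact: (part_i_uniq _ _ _ _ _ _ hnd hc t01 t02 pl H Hm Hf).
- move=> pl H Hm Hf; exact: (part_ii _ _ _ _ _ _ hnd hc t01 t02 hd pl H Hm Hf).
Qed.
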